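(* Consider the $T$-round online first-price auction problem and the combined policy described in the context. For a sequence $(v_t,m_t)_{t=1}^T$, let $V_T\coloneqq\sum_{t=2}^T|m_t-m_{t-1}|$ and $L_T\coloneqq\sum_{t=2}^T\mathbbm{1}(m_t\ne m_{t-1})$, and assume $V_T=\Omega(\ln T)$. Then the combined policy achieves expected dynamic regret $\tilde{O}(\min\{\sqrt{TV_T},L_T\})$.
   Context: Online first-price auction over $T$ rounds: at each round $t$ the learner observes a private value $v_t\in[0,1]$, submits a bid $b_t\in[0,1]$ (possibly randomized, depending only on past $(v_s,m_s)_{s<t}$ and $v_t$), then observes $m_t\in[0,1]$, the highest bid of the other bidders, and receives reward $r(b_t;v_t,m_t)$ with $r(b;v,m)\coloneqq(v-b)\mathbbm{1}(b\ge m)$. The expected dynamic regret is $\mathbb{E}[\mathrm{DR}_T(\pi)]\coloneqq\sum_{t=1}^T\max\{v_t-m_t,0\}-\sum_{t=1}^T\mathbb{E}[r(b_t;v_t,m_t)]$. $\tilde{O}(\cdot)$ hides polylogarithmic factors in $T$. Base policy $\mathcal{A}$ (AR-Prod): experts $i\in\{1,\dots,N\}$, $N=1/\epsilon$, $\epsilon=1/T$, expert $i$ bids $\min\{v_t,i\epsilon\}$ with reward $r_{t,i}=r(\min\{v_t,i\epsilon\};v_t,m_t)$; time is split into batches, at the start of each batch weights reset to uniform; bid $\min\{v_t,i\epsilon\}$ is chosen w.p. $p_{t,i}$, then $p_{t+1,i}\propto(1+\eta(r_{t,i}-\mu_t))p_{t,i}$ with $\eta=1/2$, $\mu_t=\max\{v_t-m_t,0\}$;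 batch $j$ continues while its current length $\Delta_{T,j}<\sqrt{T/(\sum_{i=1}^jV_{T,i}+1/T)}$, where $V_{T,i}$ is the variation $\sum|m_t-m_{t-1}|$ over consecutive rounds within batch $i$ (so far, for the current batch). Base policy $\mathcal{B}$ (AR-OMD): same experts (with suitably chosen precision $\epsilon$ and learning rate $\eta$); a new batch begins at round $t+1$ whenever at a non-first round $t$ of the batch $m_t\ne m_{t-1}$; in round $t$ of a batch starting at $t_0$, bid $\min\{v_t,i\epsilon\}$ w.p. $p_{t,i}\propto\exp(\eta(\sum_{s=t_0}^{t-1}r_{s,i}+r(\min\{v_t,i\epsilon\};v_t,m_{t-1})))$. Combined policy: with $\eta'=\frac12\sqrt{\ln T/T}$, $w_1^{\mathcal{A}}=\eta'$, $w^{\mathcal{B}}=1-\eta'$ (fixed); at each round both base policies produce bids $b_t^{\mathcal{A}},b_t^{\mathcal{B}}$; the learner bids $b_t^{\mathcal{A}}$ with probability $p_t=w_t^{\mathcal{A}}/(w_t^{\mathcal{A}}+w^{\mathcal{B}})$ and $b_t^{\mathcal{B}}$ otherwise; after observing $m_t$ (which is passed to both base policies), set $\delta_t=r(b_t^{\mathcal{A}};v_t,m_t)-r(b_t^{\mathcal{B}};v_t,m_t)$ and $w_{t+1}^{\mathcal{A}}=w_t^{\mathcal{A}}(1+\eta'\delta_t)$. *)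

(* Defs.v *)
From Stdlib Require Import Reals List.
Open Scope R_scope.

(* Rounds are indexed t = 1..T; a sequence is a pair of functions v m : nat -> R
   (values at t = 0 or t > T are irrelevant). *)

Definition lsum (l : list nat) (f : nat -> R) : R :=
  fold_right (fun i acc => f i + acc) 0 l.

Definition rew (b v m : R) : R := if Rle_dec m b then v - b else 0.

Definition mu (v m : R) : R := Rmax (v - m) 0.

Definition experts (N : nat) : list nat := List.seq 1 N.
Definition bid (N i : nat) (v : R) : R := Rmin v (INR i / INR N).

Record stA := mkA {
  wA : nat -> R;      (* (unnormalised) weights of the experts *)
  lenA : nat;         (* number of rounds played so far in the current batch *)
  VprevA : R;         (* sum of the variations of the completed batches *)
  VcurA : R           (* variation of the current batch so far *)
}.

Definition initA : stA := mkA (fun _ => 1) 0 0 0.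

Definition probA (N : nat) (s : stA) (i : nat) : R :=
  wA s i / lsum (experts N) (wA s).

Definition stepA (T : nat) (s : stA) (vt mt mprev : R) : stA :=
  let Vc := if Nat.eqb (lenA s) 0 then VcurA s else VcurA s + Rabs (mt - mprev) in
  let len := S (lenA s) in
  let w' := fun i => (1 + / 2 * (rew (bid T i vt) vt mt - mu vt mt)) * probA T s i in
  if Rlt_dec (INR len) (sqrt (INR T / (VprevA s + Vc + / INR T)))
  then mkA w' len (VprevA s) Vc
  else mkA (fun _ => 1) 0 (VprevA s + Vc) 0.

(* state of A at the start of round t (t >= 1) *)
Fixpoint stateA (T : nat) (v m : nat -> R) (t : nat) : stA :=
  match t with
  | S (S k as t') => stepA T (stateA T v m t') (v t') (m t') (m k)
  | _ => initA
  end.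

Definition pA (T : nat) (v m : nat -> R) (t i : nat) : R :=
  probA T (stateA T v m t) i.

(* first round of the batch containing round t *)
Fixpoint startB (m : nat -> R) (t : nat) : nat :=
  match t with
  | S (S k as t') =>
      let s := startB m t' in
      if andb (Nat.ltb s t') (if Req_EM_T (m t') (m k) then false else true)
      then t else s
  | _ => 1%nat
  end.

(* m_{t-1}, with the convention m_0 := 0 *)
Definition prevm (m : nat -> R) (t : nat) : R :=
  match t with S (S k) => m (S k) | _ => 0 end.

Definition scoreB (NB : nat) (etaB : R) (v m : nat -> R) (t i : nat) : R :=
  let t0 := startB m t in
  exp (etaB * (lsum (List.seq t0 (t - t0)) (fun s => rew (bid NB i (v s)) (v s) (m s))
               + rew (bid NB i (v t)) (v t) (prevm m t))).

Definition pB (NB : nat) (etaB : R) (v m : nat -> R) (t i : nat) : R :=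
  scoreB NB etaB v m t i / lsum (experts NB) (scoreB NB etaB v m t).

Definition etaP (T : nat) : R := / 2 * sqrt (ln (INR T) / INR T).

(* expected total reward collected in rounds t, ..., t + fuel - 1 when the
   current weight of A is w (the weight of B is fixed to 1 - eta').
   The base policies' bids are drawn independently with probabilities pA, pB,
   and the learner plays A's bid w.p. w/(w + 1 - eta'). *)
Fixpoint expRewFrom (T NB : nat) (etaB : R) (v m : nat -> R) (fuel t : nat) (w : R) : R :=
  match fuel with
  | O => 0
  | S f =>
      let pt := w / (w + (1 - etaP T)) in
      lsum (experts T) (fun i => lsum (experts NB) (fun j =>
        let ra := rew (bid T i (v t)) (v t) (m t) in
        let rb := rew (bid NB j (v t)) (v t) (m t) in
        pA T v m t i * pB NB etaB v m t j *
          (pt * ra + (1 - pt) * rb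
           + expRewFrom T NB etaB v m f (S t) (w * (1 + etaP T * (ra - rb))))))
  end.

Definition expReward (T NB : nat) (etaB : R) (v m : nat -> R) : R :=
  expRewFrom T NB etaB v m T 1 (etaP T).

Definition DR (T NB : nat) (etaB : R) (v m : nat -> R) : R :=
  lsum (List.seq 1 T) (fun t => Rmax (v t - m t) 0) - expReward T NB etaB v m.

Definition VT (T : nat) (m : nat -> R) : R :=
  lsum (List.seq 2 (T - 1)) (fun t => Rabs (m t - m (t - 1)%nat)).
Definition LT (T : nat) (m : nat -> R) : R :=
  lsum (List.seq 2 (T - 1))
    (fun t => if Req_EM_T (m t) (m (t - 1)%nat) then 0 else 1).

(* Main.v *)
Require Import Defs.
From Stdlib Require Import Reals List Lra Lia Wf_nat Classical.
Open Scope R_scope.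

Lemma lsum_nil f : lsum nil f = 0.
Proof. reflexivity. Qed.
Lemma lsum_cons a l f : lsum (a :: l) f = f a + lsum l f.
Proof. reflexivity. Qed.
Lemma lsum_app l1 l2 f : lsum (l1 ++ l2) f = lsum l1 f + lsum l2 f.
Proof. induction l1; simpl; [lra|]. unfold lsum in *; simpl. rewrite IHl1; lra. Qed.
Lemma lsum_ext l f g : (forall x, In x l -> f x = g x) -> lsum l f = lsum l g.
Proof. induction l; intros H; simpl; auto. unfold lsum in *; simpl.
  rewrite H by (left; auto). rewrite IHl; auto. intros; apply H; right; auto. Qed.
Lemma lsum_le l f g : (forall x, In x l -> f x <= g x) -> lsum l f <= lsum l g.
Proof. induction l; intros H; unfold lsum in *; simpl; [lra|].
  assert (f a <= g a) by (apply H; left; auto).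
  assert (fold_right (fun i acc => f i + acc) 0 l <= fold_right (fun i acc => g i + acc) 0 l)
    by (apply IHl; intros; apply H; right; auto). lra. Qed.
Lemma lsum_plus l f g : lsum l (fun x => f x + g x) = lsum l f + lsum l g.
Proof. induction l; unfold lsum in *; simpl; [lra|]. rewrite IHl. lra. Qed.
Lemma lsum_scal l k f : lsum l (fun x => k * f x) = k * lsum l f.
Proof. induction l; unfold lsum in *; simpl; [lra|]. rewrite IHl. lra. Qed.
Lemma lsum_scalr l k f : lsum l (fun x => f x * k) = lsum l f * k.
Proof. induction l; unfold lsum in *; simpl; [lra|]. rewrite IHl. lra. Qed.
Lemma lsum_const l k : lsum l (fun _ => k) = INR (length l) * k.
Proof. induction l; unfold lsum in *; simpl length; [simpl; lra|].
  rewrite S_INR. simpl. rewrite IHl. lra. Qed.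
Lemma lsum_nonneg l f : (forall x, In x l -> 0 <= f x) -> 0 <= lsum l f.
Proof. intros H. replace 0 with (lsum l (fun _ => 0)).
  apply lsum_le; auto. rewrite lsum_const; lra. Qed.
Lemma lsum_minus l f g : lsum l (fun x => f x - g x) = lsum l f - lsum l g.
Proof. induction l; unfold lsum in *; simpl; [lra|]. rewrite IHl. lra. Qed.
Lemma lsum_ge_term l f a : In a l -> (forall x, In x l -> 0 <= f x) -> f a <= lsum l f.
Proof. induction l; intros Hi H; [destruct Hi|]. rewrite lsum_cons.
  destruct Hi as [->|Hi].
  - assert (0 <= lsum l f) by (apply lsum_nonneg; intros; apply H; right; auto). lra.
  - assert (0 <= f a0) by (apply H; left; auto).
    assert (f a <= lsum l f) by (apply IHl; auto; intros; apply H; right; auto). lra. Qed.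
Lemma seq_S_last s n : seq s (S n) = seq s n ++ (s + n)%nat :: nil.
Proof. replace (S n) with (n + 1)%nat by lia. rewrite seq_app. reflexivity. Qed.
Lemma length_experts N : length (experts N) = N.
Proof. unfold experts. apply length_seq. Qed.

Lemma ln_le_sub1 x : 0 < x -> ln x <= x - 1.
Proof. intros Hx. pose proof (exp_ineq1_le (ln x)). rewrite exp_ln in H; lra. Qed.
Lemma ln_ge_1inv x : 0 < x -> 1 - / x <= ln x.
Proof. intros Hx. pose proof (ln_le_sub1 (/ x) (Rinv_0_lt_compat _ Hx)).
  rewrite ln_Rinv in H; lra. Qed.
Lemma ln_1px_ge x : - / 2 <= x -> x - 2 * x * x <= ln (1 + x).
Proof. intros H. pose proof (ln_ge_1inv (1 + x) ltac:(lra)).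
  assert (1 - / (1 + x) = x / (1 + x)) by (field; lra).
  assert (x - 2 * x * x <= x / (1 + x)).
  { destruct (Rle_dec 0 x).
    - apply (Rmult_le_reg_r (1 + x)). lra. replace (x / (1 + x) * (1 + x)) with x by (field; lra). nra.
    - apply (Rmult_le_reg_r (1 + x)). lra. replace (x / (1 + x) * (1 + x)) with x by (field; lra). nra. }
  lra. Qed.
Lemma ln_div x y : 0 < x -> 0 < y -> ln (x / y) = ln x - ln y.
Proof. intros. unfold Rdiv. rewrite ln_mult, ln_Rinv; try ring; auto; apply Rinv_0_lt_compat; auto. Qed.
Lemma exp_le_mono x y : x <= y -> exp x <= exp y.
Proof. intros [H|H]. left; apply exp_increasing; auto. subst; lra. Qed.
Lemma Rabs_le_between' x b : Rabs x <= b -> - b <= x <= b.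
Proof. intros H. unfold Rabs in H. destruct Rcase_abs in H; lra. Qed.

Lemma bid_le N i v : bid N i v <= v.
Proof. unfold bid. apply Rmin_l. Qed.

Lemma rew_bid_nonneg N i v m : 0 <= rew (bid N i v) v m.
Proof. pose proof (bid_le N i v). unfold rew. destruct Rle_dec; lra. Qed.

Lemma rew_bid_le_mu N i v m : rew (bid N i v) v m <= mu v m.
Proof. pose proof (bid_le N i v). unfold rew, mu. destruct Rle_dec.
  - apply Rle_trans with (v - m). lra. apply Rmax_l.
  - apply Rmax_r. Qed.

Lemma mu_bounds v m : 0 <= v <= 1 -> 0 <= m -> 0 <= mu v m <= 1.
Proof. intros. unfold mu. split. apply Rmax_r. apply Rmax_lub; lra. Qed.

Lemma rew_bid_bounds N i v m : 0 <= v <= 1 -> 0 <= m -> 0 <= rew (bid N i v) v m <= 1.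
Proof. intros. pose proof (rew_bid_le_mu N i v m). pose proof (mu_bounds v m H H0).
  pose proof (rew_bid_nonneg N i v m). lra. Qed.

Lemma loss_above N i v m : v <= 1 -> m <= INR i / INR N ->
  mu v m - rew (bid N i v) v m <= Rmax 0 (Rmin 1 (INR i / INR N) - m).
Proof. intros Hv Hm. unfold mu, rew, bid.
  destruct (Rle_dec m v).
  - rewrite Rmax_left by lra.
    destruct (Rle_dec m (Rmin v (INR i / INR N))).
    + apply Rle_trans with (Rmin 1 (INR i / INR N) - m); [|apply Rmax_r].
      assert (Rmin v (INR i / INR N) <= Rmin 1 (INR i / INR N)).
      { unfold Rmin. repeat destruct Rle_dec; lra. }
      lra.
    + exfalso. apply n. unfold Rmin. destruct Rle_dec; lra.
  - rewrite Rmax_right by lra. destruct Rle_dec.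
    + exfalso. assert (Rmin v (INR i / INR N) <= v) by apply Rmin_l. lra.
    + pose proof (Rmax_l 0 (Rmin 1 (INR i / INR N) - m)). lra.
Qed.

Lemma min_exists (P : nat -> Prop) : (forall n, P n \/ ~ P n) ->
  forall n, P n -> exists i, P i /\ (i <= n)%nat /\ forall j, P j -> (i <= j)%nat.
Proof. intros Hd n. induction n as [n IH] using (well_founded_induction lt_wf).
  intros Pn. destruct (classic (exists j, (j < n)%nat /\ P j)) as [[j [Hj Pj]]|Hno].
  - destruct (IH j Hj Pj) as [i [Pi [Hi Hmin]]]. exists i. repeat split; auto; lia.
  - exists n. repeat split; auto. intros j Pj. destruct (Nat.le_gt_cases n j); auto.
    exfalso; apply Hno; eauto.
Qed.

Lemma grid N x : (1 <= N)%nat -> 0 <= x <= 1 ->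
  exists i, (1 <= i <= N)%nat /\ x <= INR i / INR N /\ INR i / INR N <= x + / INR N /\
    forall j, (1 <= j)%nat -> x <= INR j / INR N -> (i <= j)%nat.
Proof. intros HN Hx.
  assert (HNp : 0 < INR N) by (apply lt_0_INR; lia).
  set (P := fun j => (1 <= j)%nat /\ x <= INR j / INR N).
  assert (Hd : forall n, P n \/ ~ P n) by (intros; apply classic).
  assert (PN : P N). { split; auto. unfold Rdiv; rewrite Rinv_r by lra; lra. }
  destruct (min_exists P Hd N PN) as [i [[Hi1 Hix] [HiN Hmin]]].
  exists i. split; [lia|]. split; auto. split.
  - destruct (Nat.eq_dec i 1) as [->|Hne].
    + simpl INR. unfold Rdiv. lra.
    + assert (~ P (i - 1)%nat) as Hn.
      { intro Hp. specialize (Hmin _ Hp). lia. }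
      assert (INR (i - 1) / INR N < x).
      { destruct (Rlt_le_dec (INR (i - 1) / INR N) x); auto. exfalso; apply Hn; split; auto; lia. }
      rewrite minus_INR in H by lia. simpl INR in H.
      unfold Rdiv in *. rewrite Rmult_minus_distr_r in H. lra.
  - intros j Hj Hjx. apply Hmin. split; auto.
Qed.

Lemma div_mono N i j : (1 <= N)%nat -> (i <= j)%nat -> INR i / INR N <= INR j / INR N.
Proof. intros. assert (0 < INR N) by (apply lt_0_INR; lia).
  apply Rmult_le_compat_r. left; apply Rinv_0_lt_compat; auto. apply le_INR; auto. Qed.

Lemma dominance N i j v m : (1 <= N)%nat -> (1 <= j)%nat -> 0 <= v -> m <= INR i / INR N ->
  (forall j, (1 <= j)%nat -> m <= INR j / INR N -> (i <= j)%nat) ->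
  rew (bid N j v) v m <= rew (bid N i v) v m.
Proof. intros HN Hj Hv Hmi Hmin.
  pose proof (rew_bid_nonneg N i v m).
  destruct (Rlt_le_dec (INR j / INR N) m).
  - unfold rew at 1. destruct Rle_dec; [|lra].
    exfalso. assert (bid N j v <= INR j / INR N) by apply Rmin_r. lra.
  - assert (Hij := Hmin j Hj r). pose proof (div_mono N i j HN Hij).
    unfold rew, bid in *. 
    assert (Rmin v (INR i / INR N) <= Rmin v (INR j / INR N)).
    { unfold Rmin; repeat destruct Rle_dec; lra. }
    assert (Rmin v (INR j / INR N) <= v) by apply Rmin_l.
    destruct (Rle_dec m (Rmin v (INR j / INR N))); destruct (Rle_dec m (Rmin v (INR i / INR N))); try lra.
    exfalso. unfold Rmin in *. destruct (Rle_dec v (INR i / INR N)); destruct (Rle_dec v (INR j / INR N)); lra.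
Qed.

Lemma dsum_ge (l1 l2 : list nat) (a b : nat -> R) (X : nat -> nat -> R) (Y Z : nat -> R) (c : R) :
  (forall i, In i l1 -> 0 <= a i) -> lsum l1 a = 1 ->
  (forall j, In j l2 -> 0 <= b j) -> lsum l2 b = 1 ->
  (forall i j, In i l1 -> In j l2 -> Y i + Z j + c <= X i j) ->
  lsum l1 (fun i => a i * Y i) + lsum l2 (fun j => b j * Z j) + c <=
  lsum l1 (fun i => lsum l2 (fun j => a i * b j * X i j)).
Proof. intros Ha Sa Hb Sb HX.
  apply Rle_trans with (lsum l1 (fun i => lsum l2 (fun j => a i * b j * (Y i + Z j + c)))).
  - assert (forall i, lsum l2 (fun j => a i * b j * (Y i + Z j + c)) =
       a i * Y i + a i * lsum l2 (fun j => b j * Z j) + a i * c) as E.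
    { intros i. rewrite (lsum_ext l2 _ (fun j => (a i * Y i + a i * c) * b j + a i * (b j * Z j)))
        by (intros; ring).
      rewrite lsum_plus, !lsum_scal, Sb. ring. }
    rewrite (lsum_ext l1 _ _ (fun i _ => E i)).
    rewrite (lsum_ext l1 (fun i => a i * Y i + a i * lsum l2 (fun j => b j * Z j) + a i * c) (fun i => a i * Y i + a i * (lsum l2 (fun j => b j * Z j) + c))) by (intros; ring).
    rewrite lsum_plus, lsum_scalr, Sa. lra.
  - apply lsum_le; intros i Hi. apply lsum_le; intros j Hj.
    apply Rmult_le_compat_l. apply Rmult_le_pos; auto. apply HX; auto.
Qed.

Definition EA T v m u := lsum (experts T) (fun i => pA T v m u i * rew (bid T i (v u)) (v u) (m u)).
Definition EB NB etaB v m u := lsum (experts NB) (fun j => pB NB etaB v m u j * rew (bid NB j (v u)) (v u) (m u)).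

Definition stoch (l : list nat) (p : nat -> R) := (forall i, In i l -> 0 <= p i) /\ lsum l p = 1.

Section Comb.
Variables (T NB : nat) (etaB : R) (v m : nat -> R).
Hypothesis Heta : 0 < etaP T <= / 2.

Definition roundok u := stoch (experts T) (pA T v m u) /\ stoch (experts NB) (pB NB etaB v m u)
   /\ 0 <= v u <= 1 /\ 0 <= m u.

Lemma potB : forall f t w, 0 < w -> (forall u, (t <= u < t + f)%nat -> roundok u) ->
  lsum (seq t f) (EB NB etaB v m) - / etaP T * (ln (w + (1 - etaP T)) - ln (1 - etaP T))
   <= expRewFrom T NB etaB v m f t w.
Proof.
  set (e := etaP T). set (a := 1 - e). assert (He : 0 < e <= / 2) by exact Heta. assert (Ha : a = 1 - e) by reflexivity.
  induction f; intros t w Hw Hok.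
  - simpl. assert (ln a <= ln (w + a)) by (apply Rlt_le, ln_increasing; unfold a; lra).
    assert (0 < / e) by (apply Rinv_0_lt_compat; lra).
    try rewrite lsum_nil. nra.
  - destruct (Hok t ltac:(lia)) as [[HA1 HA2] [[HB1 HB2] [Hv Hm]]].
    simpl expRewFrom. cbv zeta. fold e. fold a.
    set (R := lsum (seq (S t) f) (EB NB etaB v m)).
    change (lsum (seq t (S f)) (EB NB etaB v m)) with (EB NB etaB v m t + R).
    unfold EB at 1.
    set (K := R - / e * (ln (w + a) - ln a)).
    apply Rle_trans with
      (lsum (experts T) (fun i => pA T v m t i * 0) + lsum (experts NB) (fun j => pB NB etaB v m t j * rew (bid NB j (v t)) (v t) (m t)) + K).
    { unfold K. rewrite (lsum_ext (experts T) _ (fun _ => 0 * 0)) by (intros; ring).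
      rewrite lsum_const. lra. }
    apply dsum_ge; auto.
    intros i j Hi Hj.
    set (ra := rew (bid T i (v t)) (v t) (m t)).
    set (rb := rew (bid NB j (v t)) (v t) (m t)).
    assert (0 <= ra <= 1) by (apply rew_bid_bounds; auto).
    assert (0 <= rb <= 1) by (apply rew_bid_bounds; auto).
    set (w' := w * (1 + e * (ra - rb))).
    assert (Hw' : 0 < w') by (unfold w'; apply Rmult_lt_0_compat; nra).
    assert (IH := IHf (S t) w' Hw' ltac:(intros; apply Hok; lia)). fold R in IH.
    set (p := w / (w + a)).
    assert (Hwa : 0 < w + a) by (unfold a; lra).
    assert (Hq : (w' + a) / (w + a) = 1 + e * p * (ra - rb)) by (unfold w', p; field; lra).
    assert (Hl : ln (w' + a) - ln (w + a) <= e * p * (ra - rb)).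
    { rewrite <- ln_div by lra. rewrite Hq. apply Rle_trans with (1 + e * p * (ra - rb) - 1).
      apply ln_le_sub1. rewrite <- Hq. apply Rdiv_lt_0_compat; lra. lra. }
    assert (/ e * (ln (w' + a) - ln (w + a)) <= p * (ra - rb)).
    { apply Rmult_le_reg_l with e. lra. rewrite <- Rmult_assoc, Rinv_r by lra. lra. }
    unfold K. lra.
Qed.

Lemma potA : forall f t w, 0 < w -> (forall u, (t <= u < t + f)%nat -> roundok u) ->
  lsum (seq t f) (EA T v m) + / etaP T * ln (w / (w + (1 - etaP T))) - 2 * etaP T * INR f
   <= expRewFrom T NB etaB v m f t w.
Proof.
  set (e := etaP T). set (a := 1 - e). assert (He : 0 < e <= / 2) by exact Heta. assert (Ha : a = 1 - e) by reflexivity.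
  induction f; intros t w Hw Hok.
  - simpl. assert (ln (w / (w + a)) <= 0).
    { rewrite <- ln_1. apply Rlt_le, ln_increasing. apply Rdiv_lt_0_compat; unfold a; lra.
      apply Rmult_lt_reg_r with (w + a). unfold a; lra. unfold Rdiv. rewrite Rmult_assoc, Rinv_l by (unfold a; lra). unfold a; lra. }
    assert (0 < / e) by (apply Rinv_0_lt_compat; lra).
    try rewrite lsum_nil. nra.
  - destruct (Hok t ltac:(lia)) as [[HA1 HA2] [[HB1 HB2] [Hv Hm]]].
    simpl expRewFrom. cbv zeta. fold e. fold a.
    set (R := lsum (seq (S t) f) (EA T v m)).
    change (lsum (seq t (S f)) (EA T v m)) with (EA T v m t + R).
    set (K := R + / e * ln (w / (w + a)) - 2 * e * INR (S f)).
    apply Rle_trans with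
      (lsum (experts T) (fun i => pA T v m t i * rew (bid T i (v t)) (v t) (m t)) + lsum (experts NB) (fun j => pB NB etaB v m t j * 0) + K).
    { unfold K, EA. rewrite (lsum_ext (experts NB) _ (fun _ => 0 * 0)) by (intros; ring).
      rewrite lsum_const. lra. }
    apply dsum_ge; auto.
    intros i j Hi Hj.
    set (ra := rew (bid T i (v t)) (v t) (m t)).
    set (rb := rew (bid NB j (v t)) (v t) (m t)).
    assert (0 <= ra <= 1) by (apply rew_bid_bounds; auto).
    assert (0 <= rb <= 1) by (apply rew_bid_bounds; auto).
    set (x := e * (ra - rb)).
    assert (Hx : - / 2 <= x <= / 2) by (unfold x; split; nra).
    set (w' := w * (1 + x)).
    assert (Hw' : 0 < w') by (unfold w'; apply Rmult_lt_0_compat; lra).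
    assert (IH := IHf (S t) w' Hw' ltac:(intros; apply Hok; lia)). fold R in IH.
    set (p := w / (w + a)).
    assert (Hwa : 0 < w + a) by (unfold a; lra).
    assert (Hp : 0 <= p <= 1).
    { unfold p; split. apply Rlt_le, Rdiv_lt_0_compat; lra.
      apply Rmult_le_reg_r with (w + a). lra. unfold Rdiv. rewrite Rmult_assoc, Rinv_l by lra. unfold a; lra. }
    assert (Hdiff : ln (w' / (w' + a)) - ln (w / (w + a)) = ln (1 + x) - ln (1 + p * x)).
    { assert (w' / (w' + a) = (w / (w + a)) * ((1 + x) / (1 + p * x))).
      { unfold w', p. field. split. lra. assert (w * x >= - w / 2) by nra. lra. }
      assert (0 < 1 + p * x) by nra.
      rewrite H1. rewrite ln_mult by (apply Rdiv_lt_0_compat; lra). rewrite (ln_div (1 + x)) by lra. ring. }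
    assert (ln (1 + p * x) <= p * x) by (pose proof (ln_le_sub1 (1 + p * x) ltac:(nra)); lra).
    assert (x - 2 * x * x <= ln (1 + x)) by (apply ln_1px_ge; lra).
    assert ((1 - p) * (ra - rb) <= / e * (ln (w' / (w' + a)) - ln (w / (w + a))) + 2 * e).
    { rewrite Hdiff.
      assert (Hd2 : (ra - rb) * (ra - rb) <= 1) by nra.
      assert (x * x <= e * e).
      { replace (x * x) with ((e * e) * ((ra - rb) * (ra - rb))) by (unfold x; ring).
        assert (0 <= e * e) by nra. nra. }
      assert (HD : (1 - p) * x - 2 * e * e <= ln (1 + x) - ln (1 + p * x)) by nra.
      apply Rmult_le_compat_l with (r := / e) in HD; [|left; apply Rinv_0_lt_compat; lra].
      replace (/ e * ((1 - p) * x - 2 * e * e)) with ((1 - p) * (ra - rb) - 2 * e) in HD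
        by (unfold x; field; lra). lra. }
    unfold K. rewrite S_INR. fold w' in IH. fold x in IH. unfold p in *. lra.
Qed.
End Comb.

Lemma stoch_norm l f : (forall i, In i l -> 0 < f i) -> l <> nil ->
  stoch l (fun i => f i / lsum l f).
Proof. intros Hf Hl.
  assert (0 < lsum l f).
  { destruct l as [|a l]; [congruence|]. rewrite lsum_cons.
    assert (0 < f a) by (apply Hf; left; auto).
    assert (0 <= lsum l f) by (apply lsum_nonneg; intros; left; apply Hf; right; auto). lra. }
  split.
  - intros i Hi. apply Rlt_le, Rdiv_lt_0_compat; auto.
  - unfold Rdiv. rewrite lsum_scalr. field. lra.
Qed.

Lemma experts_nonnil N : (1 <= N)%nat -> experts N <> nil.
Proof. intros H. unfold experts. destruct N; [lia|]. simpl. congruence. Qed.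

Lemma in_experts N i : In i (experts N) <-> (1 <= i <= N)%nat.
Proof. unfold experts. rewrite in_seq. lia. Qed.

Lemma stoch_pB NB etaB v m t : (1 <= NB)%nat -> stoch (experts NB) (pB NB etaB v m t).
Proof. intros. unfold pB. apply stoch_norm. intros; unfold scoreB; apply exp_pos.
  apply experts_nonnil; auto. Qed.

Lemma startB_SS m k : startB m (S (S k)) =
  if andb (Nat.ltb (startB m (S k)) (S k)) (if Req_EM_T (m (S k)) (m k) then false else true)
  then S (S k) else startB m (S k).
Proof. reflexivity. Qed.

Lemma startB_props m t : (1 <= t)%nat ->
  (1 <= startB m t <= t)%nat /\ forall u, (startB m t < u < t)%nat -> m u = m (u - 1)%nat.
Proof. induction t as [|t IH]; intros Ht; [lia|].
  destruct t as [|k].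
  - simpl. split. lia. intros; lia.
  - destruct (IH ltac:(lia)) as [[H1 H2] H3].
    rewrite startB_SS. set (s0 := startB m (S k)) in *. clearbody s0.
    destruct (Nat.ltb s0 (S k)) eqn:Hlt; simpl.
    + destruct (Req_EM_T (m (S k)) (m k)) as [He|He]; simpl.
      * split. lia. intros u Hu. destruct (Nat.eq_dec u (S k)) as [->|Hne].
        -- replace (S k - 1)%nat with k by lia. auto.
        -- apply H3; lia.
      * split. lia. intros; lia.
    + apply Nat.ltb_ge in Hlt. split. lia. intros; lia.
Qed.

Lemma good_round_const m t : (2 <= t)%nat -> m t = m (t - 1)%nat ->
  forall s, (startB m t <= s <= t - 1)%nat -> m s = m t.
Proof. intros Ht Heq.
  destruct (startB_props m t ltac:(lia)) as [[H1 H2] H3].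
  assert (forall d, (startB m t <= t - 1 - d)%nat -> m (t - 1 - d)%nat = m t).
  { induction d; intros Hd.
    - rewrite Nat.sub_0_r. auto.
    - rewrite <- IHd by lia. replace (t - 1 - d)%nat with (S (t - 1 - S d)) by lia.
      rewrite (H3 (S (t - 1 - S d))) by lia. f_equal. lia. }
  intros s Hs. replace s with (t - 1 - (t - 1 - s))%nat by lia. apply H. lia.
Qed.

Lemma xexp_le eta g : 0 < eta -> 0 <= g -> g * exp (- (eta * g)) <= / eta.
Proof. intros He Hg. rewrite exp_Ropp.
  pose proof (exp_ineq1_le (eta * g)). pose proof (exp_pos (eta * g)).
  set (E := exp (eta * g)) in *.
  assert (g <= E / eta).
  { replace g with ((eta * g) / eta) by (field; lra). unfold Rdiv.
    apply Rmult_le_compat_r. left; apply Rinv_0_lt_compat; auto. lra. }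
  apply Rle_trans with (E / eta * / E).
  apply Rmult_le_compat_r. left; apply Rinv_0_lt_compat; auto. auto.
  right. field. lra.
Qed.

Lemma B_good NB etaB v m t : (1 <= NB)%nat -> 0 < etaB -> (2 <= t)%nat -> m t = m (t - 1)%nat ->
  (forall s, (startB m t <= s <= t)%nat -> 0 <= v s <= 1 /\ 0 <= m s <= 1) ->
  mu (v t) (m t) - EB NB etaB v m t <= / INR NB + INR NB / etaB.
Proof. intros HN He Ht Heq Hr.
  destruct (startB_props m t ltac:(lia)) as [[H1 H2] H3].
  pose proof (good_round_const m t Ht Heq) as Hc.
  set (t0 := startB m t) in *.
  destruct (Hr t ltac:(lia)) as [Hvt Hmt].
  destruct (grid NB (m t) HN Hmt) as [is [His [Hm1 [Hm2 Hmin]]]].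
  set (r := fun j s => rew (bid NB j (v s)) (v s) (m s)).
  set (Sc := fun j => lsum (seq t0 (t - t0)) (fun s => r j s) + r j t).
  assert (Hpm : prevm m t = m t). { destruct t as [|[|k]]; try lia. simpl. rewrite Heq. reflexivity. }
  assert (Hsc : forall j, scoreB NB etaB v m t j = exp (etaB * Sc j)).
  { intros j. unfold scoreB, Sc, r. fold t0. rewrite Hpm. reflexivity. }
  set (g := fun j => r is t - r j t).
  assert (HSj : forall j, (1 <= j)%nat -> Sc j <= Sc is - g j).
  { intros j Hj. unfold Sc, g.
    assert (lsum (seq t0 (t - t0)) (fun s => r j s) <= lsum (seq t0 (t - t0)) (fun s => r is s)).
    { apply lsum_le. intros s Hs. apply in_seq in Hs. unfold r.
      destruct (Hr s ltac:(lia)) as [[Hv1 Hv2] _].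
      rewrite (Hc s ltac:(lia)). apply dominance; auto. }
    lra. }
  assert (Hg0 : forall j, (1 <= j)%nat -> 0 <= g j).
  { intros j Hj. unfold g, r. pose proof (dominance NB is j (v t) (m t) HN Hj ltac:(lra) Hm1 Hmin). lra. }
  assert (Hp : forall j, (1 <= j <= NB)%nat -> pB NB etaB v m t j <= exp (- (etaB * g j))).
  { intros j Hj. unfold pB. rewrite Hsc.
    assert (exp (etaB * Sc is) <= lsum (experts NB) (scoreB NB etaB v m t)).
    { rewrite <- Hsc. apply lsum_ge_term. apply in_experts; lia.
      intros; unfold scoreB; left; apply exp_pos. }
    pose proof (exp_pos (etaB * Sc is)). pose proof (exp_pos (etaB * Sc j)).
    apply Rle_trans with (exp (etaB * Sc j) / exp (etaB * Sc is)).
    - unfold Rdiv. apply Rmult_le_compat_l. lra. apply Rinv_le_contravar; auto.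
    - unfold Rdiv. rewrite <- exp_Ropp, <- exp_plus. apply exp_le_mono.
      pose proof (HSj j ltac:(lia)). nra. }
  assert (Hmis : mu (v t) (m t) - r is t <= / INR NB).
  { unfold r. pose proof (loss_above NB is (v t) (m t) ltac:(lra) Hm1).
    assert (Rmax 0 (Rmin 1 (INR is / INR NB) - m t) <= / INR NB).
    { apply Rmax_lub. left; apply Rinv_0_lt_compat, lt_0_INR; lia.
      pose proof (Rmin_r 1 (INR is / INR NB)). lra. }
    lra. }
  destruct (stoch_pB NB etaB v m t HN) as [Hp0 Hp1].
  unfold EB.
  assert (E1 : mu (v t) (m t) - lsum (experts NB) (fun j => pB NB etaB v m t j * rew (bid NB j (v t)) (v t) (m t))
    = lsum (experts NB) (fun j => pB NB etaB v m t j * (mu (v t) (m t) - r is t))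
      + lsum (experts NB) (fun j => pB NB etaB v m t j * g j)).
  { rewrite <- lsum_plus. 
    rewrite (lsum_ext _ (fun j => pB NB etaB v m t j * (mu (v t) (m t) - r is t) + pB NB etaB v m t j * g j)
      (fun j => mu (v t) (m t) * pB NB etaB v m t j - pB NB etaB v m t j * rew (bid NB j (v t)) (v t) (m t)))
      by (intros; unfold g, r; ring).
    rewrite lsum_minus, lsum_scal, Hp1. ring. }
  rewrite E1.
  rewrite lsum_scalr, Hp1.
  assert (lsum (experts NB) (fun j => pB NB etaB v m t j * g j) <= INR NB / etaB).
  { apply Rle_trans with (lsum (experts NB) (fun _ => / etaB)).
    - apply lsum_le. intros j Hj. apply in_experts in Hj.
      apply Rle_trans with (exp (- (etaB * g j)) * g j).
      apply Rmult_le_compat_r. apply Hg0; lia. apply Hp; lia.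
      rewrite Rmult_comm. apply xexp_le; auto. apply Hg0; lia.
    - rewrite lsum_const, length_experts. unfold Rdiv. lra. }
  lra.
Qed.

Lemma EB_nonneg NB etaB v m t : (1 <= NB)%nat -> 0 <= EB NB etaB v m t.
Proof. intros HN. destruct (stoch_pB NB etaB v m t HN) as [Hp0 _].
  unfold EB. apply lsum_nonneg. intros j Hj. apply Rmult_le_pos. auto. apply rew_bid_nonneg. Qed.

Lemma B_total T NB etaB v m : (1 <= T)%nat -> (1 <= NB)%nat -> 0 < etaB ->
  (forall t, (1 <= t <= T)%nat -> 0 <= v t <= 1 /\ 0 <= m t <= 1) ->
  lsum (seq 1 T) (fun t => mu (v t) (m t) - EB NB etaB v m t)
    <= LT T m + 1 + INR T * (/ INR NB + INR NB / etaB).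
Proof. intros HT HN He Hr.
  set (K := / INR NB + INR NB / etaB).
  assert (HK : 0 <= K).
  { unfold K. assert (0 < INR NB) by (apply lt_0_INR; lia).
    assert (0 < / INR NB) by (apply Rinv_0_lt_compat; auto).
    assert (0 < INR NB / etaB) by (apply Rdiv_lt_0_compat; auto). lra. }
  destruct T as [|T']; [lia|].
  change (seq 1 (S T')) with (1%nat :: seq 2 T'). rewrite lsum_cons.
  unfold LT. replace (S T' - 1)%nat with T' by lia.
  assert (H1 : mu (v 1%nat) (m 1%nat) - EB NB etaB v m 1 <= 1).
  { destruct (Hr 1%nat ltac:(lia)) as [Hv Hm]. pose proof (mu_bounds _ _ Hv (proj1 Hm)).
    pose proof (EB_nonneg NB etaB v m 1 HN). lra. }
  assert (H2 : lsum (seq 2 T') (fun t => mu (v t) (m t) - EB NB etaB v m t) <=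
     lsum (seq 2 T') (fun t => (if Req_EM_T (m t) (m (t - 1)%nat) then 0 else 1) + K)).
  { apply lsum_le. intros t Ht. apply in_seq in Ht.
    destruct (Hr t ltac:(lia)) as [Hv Hm].
    destruct (Req_EM_T (m t) (m (t - 1)%nat)) as [Heq|Hne].
    - pose proof (B_good NB etaB v m t HN He ltac:(lia) Heq) as HB.
      assert (HH : forall s, (startB m t <= s <= t)%nat -> 0 <= v s <= 1 /\ 0 <= m s <= 1).
      { intros s Hs. destruct (startB_props m t ltac:(lia)) as [[? ?] _]. apply Hr; lia. }
      specialize (HB HH). fold K in HB. lra.
    - pose proof (mu_bounds _ _ Hv (proj1 Hm)). pose proof (EB_nonneg NB etaB v m t HN). lra. }
  rewrite lsum_plus, lsum_const, length_seq in H2.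
  rewrite S_INR. assert (0 <= INR T') by apply pos_INR. nra.
Qed.

Definition ellA (T : nat) (v m : nat -> R) (u i : nat) := mu (v u) (m u) - rew (bid T i (v u)) (v u) (m u).
Definition LossA (T : nat) (v m : nat -> R) (u : nat) := mu (v u) (m u) - EA T v m u.

Lemma stateA_S T v m t : (1 <= t)%nat ->
  stateA T v m (S t) = stepA T (stateA T v m t) (v t) (m t) (m (t - 1)%nat).
Proof. intros. destruct t as [|k]; [lia|]. simpl. replace (k - 0)%nat with k by lia. reflexivity. Qed.

Definition VS (m : nat -> R) (t : nat) := lsum (seq 2 (t - 2)) (fun u => Rabs (m u - m (u - 1)%nat)).

Definition InvS T v m t (s : stA) :=
 let L := lenA s in
 let t0 := (t - L)%nat in
 (forall i, (1 <= i <= T)%nat -> 0 < wA s i) /\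
 (L <= t - 1)%nat /\
 (L = 0%nat -> VcurA s = 0) /\
 ((0 < L)%nat -> INR L < sqrt (INR T / (VprevA s + VcurA s + / INR T))) /\
 0 <= VprevA s /\ 0 <= VcurA s /\
 (forall u, (t0 <= u <= t - 1)%nat -> Rabs (m u - m (t - 1)%nat) <= VcurA s) /\
 VprevA s + VcurA s <= VS m t /\
 (forall i, (1 <= i <= T)%nat -> lsum (seq t0 L) (LossA T v m) <=
     2 * ln (INR T) + 2 * ln (probA T s i) + 2 * lsum (seq t0 L) (fun u => ellA T v m u i)) /\
 exists J : nat,
   lsum (seq 1 (t0 - 1)) (LossA T v m) <=
     INR J * (2 * ln (INR T) + 1) + 8 * sqrt (INR T) * sqrt (VprevA s + / INR T) + 2 * INR (t0 - 1) / INR T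
   /\ INR J * sqrt (INR T / (VprevA s + / INR T)) <= INR (t0 - 1).

Definition Inv T v m t := InvS T v m t (stateA T v m t).

Lemma lsum_experts_one T : lsum (experts T) (fun _ => 1) = INR T.
Proof. rewrite lsum_const, length_experts. ring. Qed.

Lemma Inv_1 T v m : (1 <= T)%nat -> Inv T v m 1.
Proof. intros HT. assert (0 < INR T) by (apply lt_0_INR; lia).
  assert (0 < / INR T) by (apply Rinv_0_lt_compat; auto).
  unfold Inv, InvS. simpl stateA. simpl. 
  repeat split.
  - intros; lra.
  - lia.
  - intros; lia.
  - lra.
  - lra.
  - intros; lia.
  - unfold VS. simpl. unfold lsum. simpl. lra.
  - intros i Hi. unfold probA. simpl. rewrite lsum_experts_one.
    unfold Rdiv. rewrite Rmult_1_l, ln_Rinv by auto. lra.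
  - exists 0%nat. simpl. split.
    + assert (0 <= sqrt (INR T)) by apply sqrt_pos.
      assert (0 <= sqrt (0 + / INR T)) by apply sqrt_pos. unfold lsum; simpl. nra.
    + lra.
Qed.

Lemma prod_step (l : list nat) (p ell : nat -> R) i :
  (forall j, In j l -> 0 < p j) -> lsum l p = 1 ->
  (forall j, In j l -> 0 <= ell j <= 1) -> In i l ->
  lsum l (fun j => p j * ell j) <=
    2 * ln ((1 - ell i / 2) * p i / lsum l (fun j => (1 - ell j / 2) * p j)) - 2 * ln (p i) + 2 * ell i.
Proof. intros Hp Hs He Hi.
  set (Ls := lsum l (fun j => p j * ell j)).
  assert (HLs : 0 <= Ls <= 1).
  { split. apply lsum_nonneg; intros j Hj. apply Rmult_le_pos. left; auto. apply He; auto.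
    rewrite <- Hs. apply lsum_le; intros j Hj. specialize (Hp j Hj). specialize (He j Hj). nra. }
  assert (HW : lsum l (fun j => (1 - ell j / 2) * p j) = 1 - Ls / 2).
  { rewrite (lsum_ext l _ (fun j => p j - / 2 * (p j * ell j))) by (intros; field).
    rewrite lsum_minus, lsum_scal, Hs. unfold Ls. field. }
  rewrite HW.
  specialize (Hp i Hi). specialize (He i Hi).
  rewrite ln_div, ln_mult by (try apply Rmult_lt_0_compat; lra).
  assert (h1 : ln (1 - Ls / 2) <= - (Ls / 2)) by (pose proof (ln_le_sub1 (1 - Ls / 2) ltac:(lra)); lra).
  assert (h2 : 1 - / (1 - ell i / 2) <= ln (1 - ell i / 2)) by (apply ln_ge_1inv; lra).
  assert (h3 : - ell i <= 1 - / (1 - ell i / 2)).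
  { replace (1 - / (1 - ell i / 2)) with (- (ell i / 2) / (1 - ell i / 2)) by (field; lra).
    apply Rmult_le_reg_r with (1 - ell i / 2). lra.
    replace (- (ell i / 2) / (1 - ell i / 2) * (1 - ell i / 2)) with (- (ell i / 2)) by (field; lra).
    nra. }
  lra.
Qed.

Lemma lsum_pos l f : (forall i, In i l -> 0 < f i) -> l <> nil -> 0 < lsum l f.
Proof. intros Hf Hl. destruct l as [|a l]; [congruence|]. rewrite lsum_cons.
  assert (0 < f a) by (apply Hf; left; auto).
  assert (0 <= lsum l f) by (apply lsum_nonneg; intros; left; apply Hf; right; auto). lra. Qed.

Lemma pA_stoch T v m t : (1 <= T)%nat -> (forall i, (1 <= i <= T)%nat -> 0 < wA (stateA T v m t) i) ->
  stoch (experts T) (pA T v m t) /\ (forall i, In i (experts T) -> 0 < pA T v m t i).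
Proof. intros HT Hw. unfold pA, probA.
  assert (Hw' : forall i, In i (experts T) -> 0 < wA (stateA T v m t) i) by (intros i Hi; apply Hw, in_experts; auto).
  split. apply stoch_norm; auto. apply experts_nonnil; auto.
  intros i Hi. apply Rdiv_lt_0_compat; auto.
  apply lsum_pos; auto. apply experts_nonnil; auto.
Qed.

Lemma LossA_eq T v m t : lsum (experts T) (pA T v m t) = 1 ->
  LossA T v m t = lsum (experts T) (fun i => pA T v m t i * ellA T v m t i).
Proof. intros Hs. unfold LossA, EA, ellA.
  rewrite (lsum_ext _ (fun i => pA T v m t i * (mu (v t) (m t) - rew (bid T i (v t)) (v t) (m t)))
     (fun i => mu (v t) (m t) * pA T v m t i - pA T v m t i * rew (bid T i (v t)) (v t) (m t))) by (intros; ring).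
  rewrite lsum_minus, lsum_scal, Hs. ring. Qed.

Lemma ellA_bounds T v m u i : 0 <= v u <= 1 -> 0 <= m u -> 0 <= ellA T v m u i <= 1.
Proof. intros. unfold ellA. pose proof (rew_bid_le_mu T i (v u) (m u)).
  pose proof (rew_bid_nonneg T i (v u) (m u)). pose proof (mu_bounds _ _ H H0). lra. Qed.

Lemma LossA_bounds T v m t : stoch (experts T) (pA T v m t) -> 0 <= v t <= 1 -> 0 <= m t ->
  0 <= LossA T v m t <= 1.
Proof. intros [H0 H1] Hv Hm. rewrite LossA_eq by auto. split.
  - apply lsum_nonneg. intros. apply Rmult_le_pos; auto. apply ellA_bounds; auto.
  - rewrite <- H1. apply lsum_le. intros i Hi. pose proof (ellA_bounds T v m t i Hv Hm).
    specialize (H0 i Hi). nra.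
Qed.

Lemma ln_INR_nonneg T : (1 <= T)%nat -> 0 <= ln (INR T).
Proof. intros. destruct (Nat.eq_dec T 1) as [->|Hne]. simpl; rewrite ln_1; lra.
  rewrite <- ln_1. left. apply ln_increasing. lra. apply lt_1_INR. lia. Qed.

Definition rangeok T (v m : nat -> R) := forall t, (1 <= t <= T)%nat -> 0 <= v t <= 1 /\ 0 <= m t <= 1.

Lemma batch_bound T v m t : (1 <= T)%nat -> (1 <= t <= S T)%nat -> rangeok T v m -> Inv T v m t ->
  let s := stateA T v m t in
  lsum (seq (t - lenA s) (lenA s)) (LossA T v m) <= 2 * ln (INR T) + 2 * INR (lenA s) * (2 * VcurA s + / INR T).
Proof. intros HT Ht Hr HI s.
  destruct HI as [HW [HL [HZ [HC [HVp [HVc [HD [HG [HE HR]]]]]]]]].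
  fold s in HW, HL, HZ, HC, HVp, HVc, HD, HG, HE, HR.
  pose proof (ln_INR_nonneg T HT).
  assert (HTp : 0 < INR T) by (apply lt_0_INR; lia).
  assert (0 < / INR T) by (apply Rinv_0_lt_compat; auto).
  set (L := lenA s) in *. set (V := VcurA s) in *.
  destruct (Nat.eq_dec L 0) as [HL0|HL0].
  - rewrite HL0. simpl. unfold lsum; simpl. lra.
  - destruct (Hr (t - 1)%nat ltac:(lia)) as [_ Hm1].
    set (x := Rmin 1 (m (t - 1)%nat + V)).
    assert (Hx : 0 <= x <= 1) by (unfold x, Rmin; destruct Rle_dec; lra).
    destruct (grid T x HT Hx) as [i [Hi [Hx1 [Hx2 _]]]].
    destruct (pA_stoch T v m t HT HW) as [[Hp0 Hp1] Hpp].
    assert (Hin : In i (experts T)) by (apply in_experts; auto).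
    assert (Hp1' : pA T v m t i <= 1) by (rewrite <- Hp1; apply lsum_ge_term; auto).
    assert (Hlnp : ln (pA T v m t i) <= 0) by (rewrite <- ln_1; destruct Hp1' as [Hlt|Heq];
       [left; apply ln_increasing; auto | rewrite Heq; lra]).
    assert (Hsum : lsum (seq (t - L) L) (fun u => ellA T v m u i) <= INR L * (2 * V + / INR T)).
    { apply Rle_trans with (lsum (seq (t - L) L) (fun _ => 2 * V + / INR T)).
      2: { rewrite lsum_const, length_seq. lra. }
      apply lsum_le. intros u Hu. apply in_seq in Hu.
      destruct (Hr u ltac:(lia)) as [Hvu Hmu].
      specialize (HD u ltac:(lia)). fold V in HD.
      assert (Hmx : m u <= x).
      { unfold x, Rmin. destruct Rle_dec. lra. apply Rabs_le_between' in HD. lra. }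
      pose proof (loss_above T i (v u) (m u) ltac:(lra) ltac:(lra)) as Hla.
      unfold ellA. eapply Rle_trans; [apply Hla|].
      apply Rmax_lub. apply Rabs_le_between' in HD. lra.
      assert (Rmin 1 (INR i / INR T) <= m (t - 1)%nat + V + / INR T).
      { unfold x, Rmin in *. repeat destruct Rle_dec; lra. }
      apply Rabs_le_between' in HD. lra. }
    specialize (HE i Hi). fold L in HE. change (pA T v m t i) with (probA T s i) in Hlnp. lra.
Qed.

Lemma sqrt_inc_bound a x : 0 < a -> 0 <= x -> x / sqrt (a + x) <= 2 * (sqrt (a + x) - sqrt a).
Proof. intros Ha Hx.
  assert (HA : 0 < sqrt (a + x)) by (apply sqrt_lt_R0; lra).
  assert (HB : 0 < sqrt a) by (apply sqrt_lt_R0; lra).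
  assert (HAB : sqrt a <= sqrt (a + x)) by (apply sqrt_le_1_alt; lra).
  assert (Hx2 : x = sqrt (a + x) * sqrt (a + x) - sqrt a * sqrt a) by (rewrite !sqrt_sqrt; lra).
  apply Rmult_le_reg_r with (sqrt (a + x)); auto.
  unfold Rdiv. rewrite Rmult_assoc, Rinv_l by lra. nra.
Qed.

Lemma sqrt_div_anti T a b : 0 <= T -> 0 < a -> a <= b -> sqrt (T / b) <= sqrt (T / a).
Proof. intros. apply sqrt_le_1_alt. unfold Rdiv. apply Rmult_le_compat_l; auto.
  apply Rinv_le_contravar; auto. Qed.

Lemma LV_bound T L V X : 0 < T -> 0 < X -> 0 <= V -> 0 <= L -> L < sqrt (T / X) ->
  L * V <= sqrt T * (V / sqrt X).
Proof. intros. rewrite sqrt_div in H3 by lra.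
  assert (0 < sqrt X) by (apply sqrt_lt_R0; auto).
  replace (sqrt T * (V / sqrt X)) with (sqrt T / sqrt X * V) by (field; lra).
  apply Rmult_le_compat_r; lra. Qed.

Lemma VS_S m t : (2 <= t)%nat -> VS m (S t) = VS m t + Rabs (m t - m (t - 1)%nat).
Proof. intros. unfold VS. replace (S t - 2)%nat with ((t - 2) + 1)%nat by lia.
  rewrite seq_app, lsum_app. replace (2 + (t - 2))%nat with t by lia.
  unfold lsum at 2. simpl. lra. Qed.

Lemma VS_mono m t : (1 <= t)%nat -> VS m t <= VS m (S t).
Proof. intros. destruct (Nat.eq_dec t 1) as [->|Hne].
  - unfold VS. simpl. unfold lsum; simpl. lra.
  - rewrite VS_S by lia. pose proof (Rabs_pos (m t - m (t - 1)%nat)). lra. Qed.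

Lemma probA_reset T Vp i : (1 <= T)%nat -> probA T (mkA (fun _ => 1) 0 Vp 0) i = / INR T.
Proof. intros. unfold probA. simpl. rewrite lsum_experts_one. unfold Rdiv. ring. Qed.

Lemma Inv_step T v m t : (1 <= T)%nat -> (1 <= t <= T)%nat -> rangeok T v m -> Inv T v m t -> Inv T v m (S t).
Proof.
  intros HT Ht Hr HI.
  pose proof (batch_bound T v m t HT ltac:(lia) Hr HI) as HBB. cbv zeta in HBB.
  assert (HWp : forall i, (1 <= i <= T)%nat -> 0 < wA (stateA T v m t) i) by apply HI.
  destruct (pA_stoch T v m t HT HWp) as [[Hp0 Hp1] Hpp].
  destruct (Hr t ltac:(lia)) as [Hvt Hmt].
  pose proof (LossA_bounds T v m t (conj Hp0 Hp1) Hvt (proj1 Hmt)) as HLoss.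
  unfold Inv in *. rewrite stateA_S by lia.
  unfold pA in Hpp, Hp0, Hp1.
  set (s := stateA T v m t) in *.
  destruct HI as [HW [HL [HZ [HC [HVp [HVc [HD [HG [HE HR]]]]]]]]].
  set (L := lenA s) in *. set (V := VcurA s) in *. set (Vp := VprevA s) in *.
  assert (HTp : 0 < INR T) by (apply lt_0_INR; lia).
  assert (HiT : 0 < / INR T) by (apply Rinv_0_lt_compat; auto).
  pose proof (ln_INR_nonneg T HT) as HlnT.
  set (Vc := if Nat.eqb L 0 then V else V + Rabs (m t - m (t - 1)%nat)).
  assert (HVcV : V <= Vc).
  { unfold Vc. destruct (Nat.eqb L 0). lra. pose proof (Rabs_pos (m t - m (t - 1)%nat)). lra. }
  assert (HVc0 : L = 0%nat -> Vc = 0).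
  { intros H0. unfold Vc. rewrite H0. simpl. auto. }
  assert (HVcp : L <> 0%nat -> Vc = V + Rabs (m t - m (t - 1)%nat)).
  { intros H0. unfold Vc. apply Nat.eqb_neq in H0. rewrite H0. auto. }
  assert (HGn : Vp + Vc <= VS m (S t)).
  { destruct (Nat.eq_dec L 0) as [H0|H0].
    - rewrite HVc0 by auto. rewrite (HZ H0) in HG. pose proof (VS_mono m t ltac:(lia)). lra.
    - rewrite HVcp by auto. rewrite VS_S by lia. lra. }
  unfold stepA. fold s. fold L. fold V. fold Vp. fold Vc.
  destruct (Rlt_dec (INR (S L)) (sqrt (INR T / (Vp + Vc + / INR T)))) as [Hcont|Hstop].
  -
    unfold InvS. cbn [lenA wA VprevA VcurA]. cbv zeta.
    replace (S t - S L)%nat with (t - L)%nat by lia.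
    replace (S t - 1)%nat with t by lia.
    assert (Hw' : forall j, (1 + / 2 * (rew (bid T j (v t)) (v t) (m t) - mu (v t) (m t))) * probA T s j
        = (1 - ellA T v m t j / 2) * probA T s j) by (intros; unfold ellA; field).
    repeat split.
    + intros i Hi. rewrite Hw'. pose proof (ellA_bounds T v m t i Hvt (proj1 Hmt)).
      apply Rmult_lt_0_compat. lra. apply Hpp, in_experts; auto.
    + lia.
    + intros; lia.
    + intros _. exact Hcont.
    + auto.
    + lra.
    + intros u Hu. destruct (Nat.eq_dec L 0) as [H0|H0].
      * assert (u = t) by lia. subst u. rewrite Rminus_diag, Rabs_R0. lra.
      * rewrite HVcp by auto. destruct (Nat.eq_dec u t) as [->|Hne].
        -- rewrite Rminus_diag, Rabs_R0. pose proof (Rabs_pos (m t - m (t - 1)%nat)). lra.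
        -- specialize (HD u ltac:(lia)).
           pose proof (Rabs_triang (m u - m (t - 1)%nat) (m (t - 1)%nat - m t)).
           replace (m u - m (t - 1)%nat + (m (t - 1)%nat - m t)) with (m u - m t) in H by ring.
           rewrite Rabs_minus_sym with (x := m (t - 1)%nat) in H. fold V in HD. lra.
    + exact HGn.
    + intros i Hi. 
      replace (S L) with (L + 1)%nat by lia. rewrite !seq_app, !lsum_app.
      replace (t - L + L)%nat with t by lia.
      unfold lsum at 2 4. simpl.
      unfold probA at 1. cbn [wA].
      rewrite (lsum_ext (experts T) _ (fun j => (1 - ellA T v m t j / 2) * probA T s j)) by (intros; apply Hw').
      rewrite Hw'.
      assert (HI' : In i (experts T)) by (apply in_experts; auto).
      pose proof (prod_step (experts T) (probA T s) (ellA T v m t) i Hpp Hp1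
        (fun j Hj => ellA_bounds T v m t j Hvt (proj1 Hmt)) HI') as HP.
      assert (HLe : LossA T v m t = lsum (experts T) (fun j => probA T s j * ellA T v m t j))
        by (apply LossA_eq; exact Hp1).
      rewrite <- HLe in HP.
      specialize (HE i Hi). fold L in HE. lra.
    + destruct HR as [J [HR1 HR2]]. exists J. fold Vp in HR1, HR2. split; auto.
  -
    unfold InvS. cbn [lenA wA VprevA VcurA]. cbv zeta.
    replace (S t - 0)%nat with (S t) by lia. replace (S t - 1)%nat with t by lia.
    repeat split.
    + intros; lra.
    + lia.
    + intros; lia.
    + lra.
    + lra.
    + intros u Hu; lia.
    + lra.
    + intros i Hi. rewrite probA_reset by auto. rewrite ln_Rinv by auto.
      simpl. unfold lsum; simpl. lra.
    + destruct HR as [J [HR1 HR2]]. fold Vp in HR1, HR2. exists (S J).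
      assert (Hsq : 4 * (INR L * V) <= 8 * sqrt (INR T) * (sqrt (Vp + Vc + / INR T) - sqrt (Vp + / INR T))).
      { assert (sqrt (Vp + / INR T) <= sqrt (Vp + Vc + / INR T)) by (apply sqrt_le_1_alt; lra).
        pose proof (sqrt_pos (INR T)).
        destruct (Nat.eq_dec L 0) as [HL0|HL0].
        - rewrite (HZ HL0). rewrite Rmult_0_r. nra.
        - assert (HLV : INR L * V <= sqrt (INR T) * (V / sqrt (Vp + V + / INR T))).
          { apply LV_bound; auto. lra. apply pos_INR. apply HC. lia. }
          pose proof (sqrt_inc_bound (Vp + / INR T) V ltac:(lra) HVc) as Hs.
          replace (Vp + / INR T + V) with (Vp + V + / INR T) in Hs by ring.
          assert (sqrt (Vp + V + / INR T) <= sqrt (Vp + Vc + / INR T)) by (apply sqrt_le_1_alt; lra).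
          assert (Hq : V / sqrt (Vp + V + / INR T) <= 2 * (sqrt (Vp + Vc + / INR T) - sqrt (Vp + / INR T))) by lra.
          apply Rmult_le_compat_l with (r := sqrt (INR T)) in Hq; auto. nra. }
      assert (Hcnt : (t - L - 1 + L + 1 = t)%nat) by lia.
      assert (HINR : INR (t - L - 1) + INR L + 1 = INR t).
      { rewrite <- Hcnt at 2. rewrite !plus_INR. simpl. ring. }
      split.
      * replace (seq 1 t) with (seq 1 (t - L - 1 + L + 1)) by (f_equal; lia).
        rewrite !seq_app, !lsum_app.
        replace (1 + (t - L - 1))%nat with (t - L)%nat by lia.
        replace (t - L + L)%nat with t by lia.
        replace (1 + (t - L - 1 + L))%nat with t by lia.
        change (seq t 1) with (t :: nil). rewrite lsum_cons, lsum_nil.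
        rewrite S_INR.
        assert (Hsp : 0 <= sqrt (Vp + Vc + / INR T)) by apply sqrt_pos.
        assert (2 * INR (t - L - 1) / INR T + 2 * INR L / INR T <= 2 * INR t / INR T).
        { unfold Rdiv. rewrite <- HINR. nra. }
        assert (2 * INR L * (2 * V + / INR T) = 4 * (INR L * V) + 2 * INR L / INR T) by (unfold Rdiv; ring).
        fold L in HBB. fold V in HBB.
        replace (2 * INR t / INR T) with (2 * INR t / INR T) by reflexivity.
        lra.
      * rewrite S_INR.
        assert (Hs1 : sqrt (INR T / (Vp + Vc + / INR T)) <= sqrt (INR T / (Vp + / INR T)))
          by (apply sqrt_div_anti; lra).
        assert (Hs2 : sqrt (INR T / (Vp + Vc + / INR T)) <= INR (S L)) by (apply Rnot_lt_le; auto).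
        pose proof (pos_INR J). rewrite S_INR in Hs2. 
        assert (INR J * sqrt (INR T / (Vp + Vc + / INR T)) <= INR J * sqrt (INR T / (Vp + / INR T)))
          by (apply Rmult_le_compat_l; auto).
        lra.
Qed.

Lemma Inv_all T v m : (1 <= T)%nat -> rangeok T v m -> forall t, (1 <= t <= S T)%nat -> Inv T v m t.
Proof. intros HT Hr t. induction t as [|t IH]; intros Ht; [lia|].
  destruct (Nat.eq_dec t 0) as [->|Hne]. apply Inv_1; auto.
  apply Inv_step; auto; try lia. apply IH. lia. Qed.

Lemma VS_VT T m : (1 <= T)%nat -> VS m (S T) = VT T m.
Proof. intros. unfold VS, VT. replace (S T - 2)%nat with (T - 1)%nat by lia. reflexivity. Qed.

Lemma A_total T v m : (1 <= T)%nat -> rangeok T v m ->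
  exists J : nat, lsum (seq 1 T) (LossA T v m) <=
     (INR J + 1) * (2 * ln (INR T) + 1) + 8 * sqrt (INR T) * sqrt (VT T m + / INR T) + 2
   /\ INR J * sqrt (INR T / (VT T m + / INR T)) <= INR T.
Proof. intros HT Hr.
  assert (HI := Inv_all T v m HT Hr (S T) ltac:(lia)).
  pose proof (batch_bound T v m (S T) HT ltac:(lia) Hr HI) as HBB. cbv zeta in HBB.
  unfold Inv in HI. set (s := stateA T v m (S T)) in *.
  destruct HI as [HW [HL [HZ [HC [HVp [HVc [HD [HG [HE HR]]]]]]]]].
  set (L := lenA s) in *. set (V := VcurA s) in *. set (Vp := VprevA s) in *.
  assert (HTp : 0 < INR T) by (apply lt_0_INR; lia).
  assert (HiT : 0 < / INR T) by (apply Rinv_0_lt_compat; auto).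
  rewrite VS_VT in HG by auto.
  destruct HR as [J [HR1 HR2]]. fold Vp in HR1, HR2. exists J.
  assert (Hsq : 4 * (INR L * V) <= 8 * sqrt (INR T) * (sqrt (Vp + V + / INR T) - sqrt (Vp + / INR T))).
  { assert (sqrt (Vp + / INR T) <= sqrt (Vp + V + / INR T)) by (apply sqrt_le_1_alt; lra).
    pose proof (sqrt_pos (INR T)).
    destruct (Nat.eq_dec L 0) as [HL0|HL0].
    - rewrite (HZ HL0) in *. rewrite Rmult_0_r. nra.
    - assert (HLV : INR L * V <= sqrt (INR T) * (V / sqrt (Vp + V + / INR T))).
      { apply LV_bound; auto. lra. apply pos_INR. apply HC. lia. }
      pose proof (sqrt_inc_bound (Vp + / INR T) V ltac:(lra) HVc) as Hs.
      replace (Vp + / INR T + V) with (Vp + V + / INR T) in Hs by ring.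
      apply Rmult_le_compat_l with (r := sqrt (INR T)) in Hs; auto. nra. }
  assert (Hsm : sqrt (Vp + V + / INR T) <= sqrt (VT T m + / INR T)) by (apply sqrt_le_1_alt; lra).
  assert (Hcnt : (S T - L - 1 + L = T)%nat) by lia.
  assert (HINR : INR (S T - L - 1) + INR L = INR T).
  { rewrite <- Hcnt at 2. rewrite !plus_INR. ring. }
  split.
  - replace (seq 1 T) with (seq 1 (S T - L - 1 + L)) by (f_equal; lia).
    rewrite seq_app, lsum_app.
    replace (1 + (S T - L - 1))%nat with (S T - L)%nat by lia.
    fold L in HBB. fold V in HBB.
    assert (2 * INR (S T - L - 1) / INR T + 2 * INR L / INR T = 2).
    { replace (2 * INR (S T - L - 1) / INR T + 2 * INR L / INR T) with (2 * (INR (S T - L - 1) + INR L) / INR T) by (field; lra).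
      rewrite HINR. field. lra. }
    assert (2 * INR L * (2 * V + / INR T) = 4 * (INR L * V) + 2 * INR L / INR T) by (unfold Rdiv; ring).
    pose proof (sqrt_pos (INR T)).
    assert (8 * sqrt (INR T) * sqrt (Vp + V + / INR T) <= 8 * sqrt (INR T) * sqrt (VT T m + / INR T)) by nra.
    lra.
  - assert (Hs1 : sqrt (INR T / (VT T m + / INR T)) <= sqrt (INR T / (Vp + / INR T)))
      by (apply sqrt_div_anti; lra).
    pose proof (pos_INR J). pose proof (pos_INR L).
    assert (INR J * sqrt (INR T / (VT T m + / INR T)) <= INR J * sqrt (INR T / (Vp + / INR T)))
      by (apply Rmult_le_compat_l; auto).
    lra.
Qed.

Lemma lsum01 l f : (forall x, In x l -> f x = 0 \/ f x = 1) -> lsum l f = 0 \/ 1 <= lsum l f.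
Proof. induction l; intros H. left; reflexivity.
  rewrite lsum_cons. assert (0 <= lsum l f) by (apply lsum_nonneg; intros x Hx; destruct (H x (or_intror Hx)); lra).
  destruct (H a (or_introl eq_refl)) as [->| ->].
  - destruct IHl as [->|?]. intros; apply H; right; auto. left; lra. right; lra.
  - right; lra. Qed.

Lemma VT_le_LT T m : rangeok T (fun _ => 0) m -> VT T m <= LT T m.
Proof. intros Hr. unfold VT, LT. apply lsum_le. intros t Ht. apply in_seq in Ht.
  destruct (Req_EM_T (m t) (m (t - 1)%nat)) as [He|He].
  - rewrite He, Rminus_diag, Rabs_R0. lra.
  - destruct (Hr t ltac:(lia)) as [_ H1]. destruct (Hr (t - 1)%nat ltac:(lia)) as [_ H2].
    apply Rabs_le. lra. Qed.

Lemma LT_01 T m : LT T m = 0 \/ 1 <= LT T m.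
Proof. apply lsum01. intros x _. destruct Req_EM_T; auto. Qed.

Lemma ln3 : 1 <= ln 3.
Proof. rewrite <- ln_exp with 1. destruct (Rle_lt_or_eq _ _ exp_le_3) as [H|H].
  left. apply ln_increasing. apply exp_pos. auto. rewrite H. lra. Qed.

Lemma sq_le a b : 0 <= a -> 0 <= b -> a * a <= b * b -> a <= b.
Proof. intros. nra. Qed.
Lemma sq_eq a b : 0 <= a -> 0 <= b -> a * a = b * b -> a = b.
Proof. intros. apply Rle_antisym; apply sq_le; lra. Qed.

Lemma div_le_1 a b : 0 < b -> a <= b -> a / b <= 1.
Proof. intros. apply Rmult_le_reg_r with b; auto. replace (a / b * b) with a by (field; lra). lra. Qed.

Theorem theorem3 :
  exists (NB : nat -> nat) (etaB : nat -> R),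
    (forall T : nat, (1 <= NB T)%nat) /\ (forall T : nat, 0 < etaB T) /\
    forall c : R, 0 < c ->
    exists (C : R) (k : nat) (T0 : nat), 0 < C /\
      forall T : nat, (T0 <= T)%nat ->
      forall v m : nat -> R,
        (forall t : nat, (1 <= t <= T)%nat -> 0 <= v t <= 1 /\ 0 <= m t <= 1) ->
        c * ln (INR T) <= VT T m ->
        DR T (NB T) (etaB T) v m
          <= C * ln (INR T) ^ k * Rmin (sqrt (INR T * VT T m)) (LT T m).
Proof.
  exists (fun T => S T), (fun T => (INR T + 1) ^ 3).
  split; [intros; lia|]. split; [intros T; apply pow_lt; pose proof (pos_INR T); lra|].
  intros c Hc.
  destruct (INR_unbounded (/ c)) as [N HN].
  assert (Hic : 0 < / c) by (apply Rinv_0_lt_compat; auto).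
  exists (30 + 3 / c), 1%nat, (Nat.max 4 N).
  split. { unfold Rdiv. lra. }
  intros T HT v m Hr HV.
  assert (HT1 : (1 <= T)%nat) by lia.
  assert (HT4 : 4 <= INR T) by (replace 4 with (INR 4) by (simpl; lra); apply le_INR; lia).
  assert (HTN : / c < INR T) by (apply Rlt_le_trans with (INR N); auto; apply le_INR; lia).
  assert (HTp : 0 < INR T) by lra.
  set (lnT := ln (INR T)) in *.
  assert (HlnT : 1 <= lnT).
  { apply Rle_trans with (ln 3). apply ln3. left. apply ln_increasing; lra. }
  assert (HlnTT : lnT <= INR T) by (pose proof (ln_le_sub1 (INR T) HTp); unfold lnT; lra).
  set (V := VT T m) in *. set (L := LT T m) in *.
  assert (Hr' : rangeok T v m) by exact Hr.
  assert (HVL : V <= L) by (apply VT_le_LT; intros t Ht; split; [lra|]; apply Hr; auto).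
  assert (HVpos : c <= V) by nra.
  assert (HTV : 1 <= INR T * V).
  { apply Rle_trans with (INR T * c). 
    apply Rmult_lt_compat_r with (r := c) in HTN; auto. rewrite Rinv_l in HTN by lra. lra.
    apply Rmult_le_compat_l; lra. }
  assert (HL1 : 1 <= L) by (destruct (LT_01 T m) as [H0|H0]; change (LT T m) with L in H0; lra).
  set (Sq := sqrt (INR T * V)).
  assert (HS2 : Sq * Sq = INR T * V) by (apply sqrt_sqrt; lra).
  assert (HS0 : 0 <= Sq) by apply sqrt_pos.
  assert (HS1 : 1 <= Sq) by nra.
  set (e := etaP T).
  set (q := sqrt (lnT / INR T)).
  assert (Hq2 : q * q = lnT / INR T) by (apply sqrt_sqrt; unfold Rdiv; apply Rmult_le_pos; [lra| left; apply Rinv_0_lt_compat; lra]).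
  assert (Hq0 : 0 < q) by (apply sqrt_lt_R0; apply Rdiv_lt_0_compat; lra).
  assert (Hq1 : q <= 1).
  { apply sq_le; try lra. rewrite Hq2. apply Rmult_le_reg_r with (INR T); auto.
    unfold Rdiv. rewrite Rmult_assoc, Rinv_l by lra. lra. }
  assert (Heq : e = q / 2) by (unfold e, etaP; fold lnT; fold q; field).
  assert (Heta : 0 < etaP T <= / 2) by (fold e; rewrite Heq; lra).
  assert (Hok : forall u, (1 <= u < 1 + T)%nat -> roundok T (S T) ((INR T + 1) ^ 3) v m u).
  { intros u Hu. split; [|split].
    - assert (HI := Inv_all T v m HT1 Hr' u ltac:(lia)).
      apply (pA_stoch T v m u HT1). apply HI.
    - apply stoch_pB. lia.
    - destruct (Hr u ltac:(lia)). split; lra. }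
  pose proof (potA T (S T) ((INR T + 1) ^ 3) v m Heta T 1 e ltac:(lra) Hok) as PA.
  pose proof (potB T (S T) ((INR T + 1) ^ 3) v m Heta T 1 e ltac:(lra) Hok) as PB.
  fold e in PA, PB.
  change (expRewFrom T (S T) ((INR T + 1) ^ 3) v m T 1 e) with (expReward T (S T) ((INR T + 1) ^ 3) v m) in PA, PB.
  replace (e + (1 - e)) with 1 in PA, PB by ring.
  rewrite ln_1 in PB. unfold Rdiv in PA. rewrite Rinv_1, Rmult_1_r in PA.
  assert (HDR : DR T (S T) ((INR T + 1) ^ 3) v m =
     lsum (seq 1 T) (fun t => mu (v t) (m t)) - expReward T (S T) ((INR T + 1) ^ 3) v m) by reflexivity.
  assert (HB : DR T (S T) ((INR T + 1) ^ 3) v m <= L + 5).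
  { pose proof (B_total T (S T) ((INR T + 1) ^ 3) v m HT1 ltac:(lia) ltac:(apply pow_lt; lra) Hr) as HBt.
    rewrite lsum_minus in HBt. fold L in HBt.
    assert (Hk : INR T * (/ INR (S T) + INR (S T) / (INR T + 1) ^ 3) <= 2).
    { rewrite S_INR. replace (INR T * (/ (INR T + 1) + (INR T + 1) / (INR T + 1) ^ 3))
        with (INR T / (INR T + 1) + INR T / ((INR T + 1) * (INR T + 1))) by (field; lra).
      assert (INR T / (INR T + 1) <= 1) by (apply div_le_1; lra).
      assert (INR T / ((INR T + 1) * (INR T + 1)) <= 1) by (apply div_le_1; nra).
      lra. }
    assert (Hl1 : -2 <= / e * ln (1 - e)).
    { pose proof (ln_ge_1inv (1 - e) ltac:(lra)).
      assert (1 - / (1 - e) = - e / (1 - e)) by (field; lra).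
      assert (- e / (1 - e) >= -2 * e).
      { apply Rle_ge. apply Rmult_le_reg_r with (1 - e). lra.
        replace (- e / (1 - e) * (1 - e)) with (- e) by (field; lra). nra. }
      assert (/ e * (-2 * e) = -2) by (field; lra).
      assert (0 < / e) by (apply Rinv_0_lt_compat; lra).
      assert (/ e * (-2 * e) <= / e * ln (1 - e)) by (apply Rmult_le_compat_l; lra).
      lra. }
    rewrite HDR. lra. }
  destruct (A_total T v m HT1 Hr') as [J [HA1 HA2]]. fold V in HA1, HA2. fold lnT in HA1.
  assert (HA : DR T (S T) ((INR T + 1) ^ 3) v m <=
     lsum (seq 1 T) (LossA T v m) - / e * ln e + 2 * e * INR T).
  { rewrite HDR. unfold LossA. rewrite lsum_minus. fold lnT. lra. }
  set (Q := sqrt (INR T * lnT)).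
  assert (HQ2 : Q * Q = INR T * lnT) by (apply sqrt_sqrt; nra).
  assert (HQ0 : 0 <= Q) by apply sqrt_pos.
  assert (HqQ : q * Q = lnT).
  { apply sq_eq; try nra. replace (q * Q * (q * Q)) with ((q * q) * (Q * Q)) by ring.
    rewrite Hq2, HQ2. field. lra. }
  assert (HqT : q * INR T = Q).
  { apply sq_eq; try nra. replace (q * INR T * (q * INR T)) with ((q * q) * (INR T * INR T)) by ring.
    rewrite Hq2, HQ2. field. lra. }
  assert (Hie : / e = 2 / q) by (rewrite Heq; field; lra).
  assert (Hie2 : / e <= INR T).
  { rewrite Hie. apply Rmult_le_reg_r with q; auto. replace (2 / q * q) with 2 by (field; lra).
    apply sq_le; [lra | nra | ]. replace (INR T * q * (INR T * q)) with (INR T * (INR T * (q * q))) by ring.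
    rewrite Hq2. replace (INR T * (lnT / INR T)) with lnT by (field; lra). nra. }
  assert (Hie0 : 0 < / e) by (apply Rinv_0_lt_compat; lra).
  assert (Hlnie : ln (/ e) <= lnT).
  { destruct Hie2 as [Hlt|Hq']. left; apply ln_increasing; auto. unfold lnT; rewrite Hq'; lra. }
  assert (HKA : - / e * ln e + 2 * e * INR T <= 3 * Q).
  { rewrite <- (Rinv_inv e) at 2. rewrite ln_Rinv by auto.
    assert (/ e * ln (/ e) <= / e * lnT) by (apply Rmult_le_compat_l; lra).
    assert (/ e * lnT = 2 * Q) by (rewrite Hie, <- HqQ; field; lra).
    assert (2 * e * INR T = Q) by (rewrite Heq, <- HqT; field).
    lra. }
  assert (HQS : Q <= (1 + / c) * Sq).
  { apply sq_le; try nra.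
    replace ((1 + / c) * Sq * ((1 + / c) * Sq)) with ((1 + / c) * (1 + / c) * (Sq * Sq)) by ring.
    rewrite HQ2, HS2.
    assert (lnT <= / c * V).
    { apply Rmult_le_reg_l with c; auto. rewrite <- Rmult_assoc, Rinv_r by lra. lra. }
    assert (h1 : / c <= (1 + / c) * (1 + / c)) by nra.
    assert (h2 : 0 <= INR T * V) by lra.
    assert (h3 : INR T * lnT <= INR T * (/ c * V)) by (apply Rmult_le_compat_l; lra).
    assert (h4 : / c * (INR T * V) <= (1 + / c) * (1 + / c) * (INR T * V)) by (apply Rmult_le_compat_r; lra).
    lra. }
  set (A := sqrt (INR T) * sqrt (V + / INR T)) in *.
  assert (HiT : 0 < / INR T) by (apply Rinv_0_lt_compat; lra).
  assert (HA0 : 0 <= A) by (unfold A; apply Rmult_le_pos; apply sqrt_pos).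
  assert (HA2' : A * A = INR T * V + 1).
  { unfold A. replace (sqrt (INR T) * sqrt (V + / INR T) * (sqrt (INR T) * sqrt (V + / INR T)))
      with ((sqrt (INR T) * sqrt (INR T)) * (sqrt (V + / INR T) * sqrt (V + / INR T))) by ring.
    rewrite !sqrt_sqrt by lra. field. lra. }
  assert (HAS : A <= 2 * Sq).
  { apply sq_le; [lra | lra |]. replace (2 * Sq * (2 * Sq)) with (4 * (Sq * Sq)) by ring.
    rewrite HA2', HS2. lra. }
  set (B := sqrt (INR T / (V + / INR T))) in *.
  assert (HB0 : 0 < B) by (apply sqrt_lt_R0, Rdiv_lt_0_compat; lra).
  assert (HBA : B * A = INR T).
  { apply sq_eq. nra. lra.
    replace (B * A * (B * A)) with ((B * B) * (A * A)) by ring. rewrite HA2'.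
    unfold B. rewrite sqrt_sqrt by (apply Rlt_le, Rdiv_lt_0_compat; lra). field. lra. }
  assert (HJ : INR J <= A).
  { apply Rmult_le_reg_l with B; auto. rewrite HBA. lra. }
  assert (HRA : lsum (seq 1 T) (LossA T v m) <= 27 * Sq * lnT).
  { assert ((INR J + 1) * (2 * lnT + 1) <= (2 * Sq + 1) * (2 * lnT + 1)) by (apply Rmult_le_compat_r; lra).
    assert (h1 : Sq <= Sq * lnT) by (pose proof (Rmult_le_compat_l Sq 1 lnT HS0 HlnT); lra).
    assert (h2 : lnT <= Sq * lnT) by (pose proof (Rmult_le_compat_r lnT 1 Sq ltac:(lra) HS1); lra).
    assert (h3 : 1 <= Sq * lnT) by lra.
    assert (8 * sqrt (INR T) * sqrt (V + / INR T) = 8 * A) by (unfold A; ring).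
    lra. }
  assert (HfinA : DR T (S T) ((INR T + 1) ^ 3) v m <= (30 + 3 / c) * lnT * Sq).
  { assert (3 * Q <= 3 * (1 + / c) * Sq) by lra.
    assert (h0 : 0 <= (3 + 3 * / c) * Sq) by (apply Rmult_le_pos; lra).
    assert (h1 : (3 + 3 * / c) * Sq <= (3 + 3 * / c) * Sq * lnT)
      by (pose proof (Rmult_le_compat_l _ 1 lnT h0 HlnT); lra).
    assert (h2 : Sq <= Sq * lnT) by (pose proof (Rmult_le_compat_l Sq 1 lnT HS0 HlnT); lra).
    unfold Rdiv. lra. }
  assert (HfinB : DR T (S T) ((INR T + 1) ^ 3) v m <= (30 + 3 / c) * lnT * L).
  { assert (h0 : 0 <= 3 / c) by (unfold Rdiv; lra).
    assert (h1 : L <= L * lnT) by (pose proof (Rmult_le_compat_l L 1 lnT ltac:(lra) HlnT); lra).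
    assert (h2 : 0 <= 3 / c * lnT * L) by (apply Rmult_le_pos; [apply Rmult_le_pos|]; lra).
    lra. }
  replace (lnT ^ 1) with lnT by ring. unfold Rmin. destruct Rle_dec; auto.
Qed.
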